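(* Work on $\mathbb{C}^3$ with coordinates $X=(z,w^{\dot 1},w^{\dot 2})$, and let the ''defect'' be the complex line $\{w^{\dot 1}=w^{\dot 2}=0\}$, whose points are written $Y=(z_Y,0,0)$. For $X$ a bulk point and $Y$ a defect point, define the $(0,2)$-form $$\bar\omega_{XY}=(\bar z-\bar z_{Y})\,[d\bar w\wedge d\bar w]-2\,d(\bar z-\bar z_{Y})\wedge[\bar w\, d\bar w],$$ and the bulk-to-defect propagator $$\mathcal{K}(X,Y)=-\frac{\bar\omega_{XY}}{\pi^3\big(|z-z_Y|^2+|w^{\dot 1}|^2+|w^{\dot 2}|^2\big)^3}.$$ Then for any two defect points $Y_1=(z_1,0,0)$ and $Y_2=(z_2,0,0)$ (with $z_1,z_2$ treated either as fixed or as additional complex variables), the wedge product satisfies $$\mathcal{K}(X,Y_1)\wedge\mathcal{K}(X,Y_2)=0$$ wherever it is defined. Consequently, any bulk/defect Feynman diagram whose integrand contains two bulk-to-defect propagators attached to the same bulk vertex $X$ and ending on the defect (i.e. forming a triangle with the defect) vanishes.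
   Context: Spinor brackets: for two-component objects $a^{\dot\alpha},b^{\dot\alpha}$, $[a\,b]=a^{\dot\alpha}b_{\dot\alpha}$ with indices lowered by $w_{\dot\alpha}=w^{\dot\beta}\epsilon_{\dot\beta\dot\alpha}$, where $\epsilon$ is antisymmetric with $\epsilon^{\dot 1\dot 2}=1$; thus $[d\bar w\wedge d\bar w]$ is a nonzero multiple of $d\bar w^{\dot 1}\wedge d\bar w^{\dot 2}$ and $[\bar w\,d\bar w]$ is a multiple of $\bar w^{\dot 1}d\bar w^{\dot 2}-\bar w^{\dot 2}d\bar w^{\dot 1}$. The propagator $\mathcal{K}$ is the limit of the regularized propagator of the $(0,1)$-form gauge field of holomorphic Chern–Simons/BF type theories on twistor space in the gauge $\bar\partial^\dagger\mathsf{A}=0$, with one endpoint placed on the defect; diagrams are integrals of wedge products of such propagators, vertices and external fields over bulk and defect points. *)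

(* Defs.v *)
From HB Require Import structures.
From mathcomp Require Import all_boot all_order all_algebra.
From mathcomp Require Import reals trigo.
From mathcomp Require Import complex.
Set Implicit Arguments. Unset Strict Implicit. Unset Printing Implicit Defensive.
Import Order.TTheory GRing.Theory Num.Theory.
Local Open Scope ring_scope.
Local Open Scope complex_scope.

(* Antiholomorphic differential forms at a point, with values in C, on the
   5 generators  0 = dzbar, 1 = dwbar^1, 2 = dwbar^2, 3 = dzbar_1, 4 = dzbar_2
   (the last two are the differentials of the defect coordinates z_1, z_2 when
   these are treated as additional variables).  A form is the family of its
   coefficients on the basis monomials e_S = e_{s_1} /\ ... /\ e_{s_k}
   (s_1 < ... < s_k). *)
Definition form (C : nzRingType) := {ffun {set 'I_5} -> C}.

(* number of inversions needed to sort e_S /\ e_T into e_{S u T} *)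
Definition inv_count (S T : {set 'I_5}) : nat :=
  #|[set p : 'I_5 * 'I_5 | [&& p.1 \in S, p.2 \in T & (p.2 < p.1)%N]]|.

Definition wedge (C : nzRingType) (a b : form C) : form C :=
  [ffun U : {set 'I_5} => \sum_(S : {set 'I_5}) \sum_(T : {set 'I_5} |
     [disjoint S & T] && (S :|: T == U)) (-1) ^+ inv_count S T * a S * b T].

Definition cst (C : nzRingType) (c : C) : form C :=
  [ffun S : {set 'I_5} => if S == set0 then c else 0].

Definition gen (C : nzRingType) (i : 'I_5) : form C :=
  [ffun S : {set 'I_5} => if S == [set i] then 1 else 0].

(* Spinor bracket [a b] = a^{a} b_{a},  b_{a} = b^{c} eps_{c a}, eps^{12} = 1,
   i.e. b_1 = - b^2, b_2 = b^1;  products are wedge products. *)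
Definition bracket (C : nzRingType) (a1 a2 b1 b2 : form C) : form C :=
  wedge a1 (- b2) + wedge a2 b1.

Definition i0 : 'I_5 := @Ordinal 5 0 isT.
Definition i1 : 'I_5 := @Ordinal 5 1 isT.
Definition i2 : 'I_5 := @Ordinal 5 2 isT.
Definition i3 : 'I_5 := @Ordinal 5 3 isT.
Definition i4 : 'I_5 := @Ordinal 5 4 isT.

(* omega_{XY} = (zb - zb_Y)[dwb /\ dwb] - 2 d(zb - zb_Y) /\ [wb dwb],
   X = (z, w1, w2), Y = (zY,0,0), dzY = the differential of zbar_Y
   (0 if zY is fixed). *)
Definition omegaXY (R : realType) (z w1 w2 zY : R[i]) (dzY : form R[i])
  : form R[i] :=
  wedge (cst (z^* - zY^*)%C) (bracket (gen _ i1) (gen _ i2) (gen _ i1) (gen _ i2))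
  - 2%:R *: wedge (gen _ i0 - dzY)
              (bracket (cst (w1^*)%C) (cst (w2^*)%C) (gen _ i1) (gen _ i2)).

Definition distsq (R : realType) (z w1 w2 zY : R[i]) : R[i] :=
  `|z - zY| ^+ 2 + `|w1| ^+ 2 + `|w2| ^+ 2.

Definition propK (R : realType) (z w1 w2 zY : R[i]) (dzY : form R[i])
  : form R[i] :=
  - ((((pi : R)%:C) ^+ 3 * distsq z w1 w2 zY ^+ 3)^-1) *: omegaXY z w1 w2 zY dzY.

Definition dzdef (R : realType) (vary : bool) (i : 'I_5) : form R[i] :=
  if vary then gen _ i else 0.

(* Main.v *)
Require Import Defs.
From HB Require Import structures.
From mathcomp Require Import all_boot all_order all_algebra.
From mathcomp Require Import reals trigo complex.
From mathcomp Require Import ring.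
Import Order.TTheory GRing.Theory Num.Theory.
Local Open Scope ring_scope.

Section W.
Variable R : realType.
Local Notation K := (R[i]).
Implicit Types a b c : Defs.form K.

Lemma fD a b U : (a + b) U = a U + b U. Proof. by rewrite ffunE. Qed.
Lemma fN a U : (- a) U = - a U. Proof. by rewrite ffunE. Qed.
Lemma f0 U : (0 : Defs.form K) U = 0. Proof. by rewrite ffunE. Qed.
Lemma fZ (k : K) a U : (k *: a) U = k * a U. Proof. by rewrite ffunE. Qed.

Lemma wedgeDl a b c : wedge (a + b) c = wedge a c + wedge b c.
Proof.
apply/ffunP=> U; rewrite !ffunE -big_split; apply: eq_bigr => S _.
rewrite -big_split; apply: eq_bigr => T _; by rewrite fD mulrDr mulrDl.
Qed.
Lemma wedgeDr a b c : wedge a (b + c) = wedge a b + wedge a c.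
Proof.
apply/ffunP=> U; rewrite !ffunE -big_split; apply: eq_bigr => S _.
rewrite -big_split; apply: eq_bigr => T _; by rewrite fD mulrDr.
Qed.
Lemma wedgeZl (k : K) a b : wedge (k *: a) b = k *: wedge a b.
Proof.
apply/ffunP=> U; rewrite fZ !ffunE mulr_sumr; apply: eq_bigr => S _.
rewrite mulr_sumr; apply: eq_bigr => T _; rewrite fZ; ring.
Qed.
Lemma wedgeZr (k : K) a b : wedge a (k *: b) = k *: wedge a b.
Proof.
apply/ffunP=> U; rewrite fZ !ffunE mulr_sumr; apply: eq_bigr => S _.
rewrite mulr_sumr; apply: eq_bigr => T _; rewrite fZ; ring.
Qed.
Lemma wedgeNl a b : wedge (- a) b = - wedge a b.
Proof.
apply/ffunP=> U; rewrite fN !ffunE -sumrN; apply: eq_bigr => S _.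
rewrite -sumrN; apply: eq_bigr => T _; rewrite fN; ring.
Qed.
Lemma wedgeNr a b : wedge a (- b) = - wedge a b.
Proof.
apply/ffunP=> U; rewrite fN !ffunE -sumrN; apply: eq_bigr => S _.
rewrite -sumrN; apply: eq_bigr => T _; rewrite fN; ring.
Qed.
Lemma wedge0l a : wedge 0 a = 0.
Proof.
apply/ffunP=> U; rewrite f0 !ffunE big1 // => S _; rewrite big1 // => T _.
by rewrite f0 mulr0 mul0r.
Qed.
Lemma wedge0r a : wedge a 0 = 0.
Proof.
apply/ffunP=> U; rewrite f0 !ffunE big1 // => S _; rewrite big1 // => T _.
by rewrite f0 mulr0.
Qed.

Fact lw_key : unit. Proof. exact: tt. Qed.
Definition lw : Defs.form K -> Defs.form K -> Defs.form K := locked_with lw_key (@wedge K).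
Lemma lwE a b : wedge a b = lw a b. Proof. by rewrite /lw unlock. Qed.
Lemma lwDl a b c : lw (a + b) c = lw a c + lw b c. Proof. by rewrite -!lwE wedgeDl. Qed.
Lemma lwDr a b c : lw a (b + c) = lw a b + lw a c. Proof. by rewrite -!lwE wedgeDr. Qed.
Lemma lwNl a b : lw (- a) b = - lw a b. Proof. by rewrite -!lwE wedgeNl. Qed.
Lemma lwNr a b : lw a (- b) = - lw a b. Proof. by rewrite -!lwE wedgeNr. Qed.
Lemma lwZl (k : K) a b : lw (k *: a) b = k *: lw a b. Proof. by rewrite -!lwE wedgeZl. Qed.
Lemma lwZr (k : K) a b : lw a (k *: b) = k *: lw a b. Proof. by rewrite -!lwE wedgeZr. Qed.
Lemma lw0l a : lw 0 a = 0. Proof. by rewrite -!lwE wedge0l. Qed.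
Lemma lw0r a : lw a 0 = 0. Proof. by rewrite -!lwE wedge0r. Qed.

Fact ladd_key : unit. Proof. exact: tt. Qed.
Definition ladd : Defs.form K -> Defs.form K -> Defs.form K := locked_with ladd_key (fun a b => a + b).
Fact lopp_key : unit. Proof. exact: tt. Qed.
Definition lopp : Defs.form K -> Defs.form K := locked_with lopp_key (fun a => - a).
Fact lsc_key : unit. Proof. exact: tt. Qed.
Definition lsc : K -> Defs.form K -> Defs.form K := locked_with lsc_key (fun k a => k *: a).
Lemma laddE a b : a + b = ladd a b. Proof. by rewrite /ladd unlock. Qed.
Lemma loppE a : - a = lopp a. Proof. by rewrite /lopp unlock. Qed.
Lemma lscE k a : k *: a = lsc k a. Proof. by rewrite /lsc unlock. Qed.
Lemma laddU a b U : ladd a b U = a U + b U. Proof. by rewrite -laddE fD. Qed.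
Lemma loppU a U : lopp a U = - a U. Proof. by rewrite -loppE fN. Qed.
Lemma lscU k a U : lsc k a U = k * a U. Proof. by rewrite -lscE fZ. Qed.
Lemma LDl a b c : lw (ladd a b) c = ladd (lw a c) (lw b c). Proof. by rewrite -!laddE lwDl. Qed.
Lemma LDr a b c : lw a (ladd b c) = ladd (lw a b) (lw a c). Proof. by rewrite -!laddE lwDr. Qed.
Lemma LNl a b : lw (lopp a) b = lopp (lw a b). Proof. by rewrite -!loppE lwNl. Qed.
Lemma LNr a b : lw a (lopp b) = lopp (lw a b). Proof. by rewrite -!loppE lwNr. Qed.
Lemma LZl k a b : lw (lsc k a) b = lsc k (lw a b). Proof. by rewrite -!lscE lwZl. Qed.
Lemma LZr k a b : lw a (lsc k b) = lsc k (lw a b). Proof. by rewrite -!lscE lwZr. Qed.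
Lemma lopp0 : lopp 0 = 0. Proof. by rewrite -loppE oppr0. Qed.
Lemma lsc0 k : lsc k 0 = 0. Proof. by rewrite -lscE scaler0. Qed.
Lemma ladd0 a : ladd a 0 = a. Proof. by rewrite -laddE addr0. Qed.
Lemma ladd0l a : ladd 0 a = a. Proof. by rewrite -laddE add0r. Qed.

Fact mono_key : unit. Proof. exact: tt. Qed.
Definition mono (S : {set 'I_5}) : Defs.form K :=
  locked_with mono_key [ffun U => if U == S then 1 else 0].
Lemma monoE S U : mono S U = if U == S then 1 else 0.
Proof. by rewrite /mono unlock ffunE. Qed.

Lemma wedge_mono S T : wedge (mono S) (mono T) =
  if [disjoint S & T] then (-1) ^+ inv_count S T *: mono (S :|: T) else 0.
Proof.
apply/ffunP=> U; rewrite ffunE (bigD1 S) //=.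
rewrite [X in _ + X]big1 ?addr0 => [|S' nS]; last first.
  by apply: big1 => T' _; rewrite monoE (negbTE nS) mulr0 mul0r.
have [/andP[dST /eqP eU]|ncond] := boolP ([disjoint S & T] && (S :|: T == U)).
  rewrite (bigD1 T) /= ?dST ?eU ?eqxx // big1 ?addr0 => [|T' /andP[_ nT]]; last first.
    by rewrite [mono T T']monoE (negbTE nT) mulr0.
  by rewrite fZ !monoE !eqxx /= !mulr1.
rewrite big1 => [|T' /andP[cT' uT']]; last first.
  rewrite [mono T T']monoE; case: eqP => [eT|_]; last by rewrite mulr0.
  by move: ncond; rewrite -eT cT' uT'.
case: ifP => dST; last by rewrite f0.
rewrite fZ monoE; case: eqP => [eU|_]; last by rewrite mulr0.
by move: ncond; rewrite dST eU eqxx.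
Qed.

End W.
Arguments lw {R}. Arguments ladd {R}. Arguments lopp {R}. Arguments lsc {R}.

Lemma ord5P (x : 'I_5) : x = i0 \/ x = i1 \/ x = i2 \/ x = i3 \/ x = i4.
Proof.
case: x => [[|[|[|[|[|n]]]]] Hn].
- by left; apply: val_inj.
- by right; left; apply: val_inj.
- by right; right; left; apply: val_inj.
- by right; right; right; left; apply: val_inj.
- by right; right; right; right; apply: val_inj.
- by [].
Qed.

Lemma forall5 (P : pred 'I_5) : [forall x, P x] = [&& P i0, P i1, P i2, P i3 & P i4].
Proof.
apply/forallP/and5P => [H|[? ? ? ? ?] x]; first by split; apply: H.
by case: (ord5P x) => [|[|[|[|]]]] ->.
Qed.

Lemma sum5 (F : 'I_5 -> nat) : (\sum_x F x = F i0 + (F i1 + (F i2 + (F i3 + F i4))))%N.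
Proof.
rewrite !big_ord_recl big_ord0 addn0.
by congr (F _ + (F _ + (F _ + (F _ + F _))))%N; apply: val_inj.
Qed.

Lemma disj5 (S T : {set 'I_5}) : [disjoint S & T] =
  [&& ~~ ((i0 \in S) && (i0 \in T)), ~~ ((i1 \in S) && (i1 \in T)),
      ~~ ((i2 \in S) && (i2 \in T)), ~~ ((i3 \in S) && (i3 \in T))
    & ~~ ((i4 \in S) && (i4 \in T))].
Proof.
rewrite -(forall5 (fun x => ~~ ((x \in S) && (x \in T)))).
rewrite disjoint_subset.
apply/subsetP/forallP => [H x|H x xS].
  by apply/negP => /andP[xS xT]; move: (H x xS); rewrite inE xT.
by move: (H x); rewrite xS inE.
Qed.

Lemma eq5 (U V : {set 'I_5}) : (U == V) =
  [&& (i0 \in U) == (i0 \in V), (i1 \in U) == (i1 \in V), (i2 \in U) == (i2 \in V),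
      (i3 \in U) == (i3 \in V) & (i4 \in U) == (i4 \in V)].
Proof.
rewrite -(forall5 (fun x => (x \in U) == (x \in V))).
apply/eqP/forallP => [-> x //|H]; apply/setP => x; exact/eqP/H.
Qed.

Lemma inv5 (S T : {set 'I_5}) : inv_count S T =
  (\sum_(x : 'I_5) \sum_(y : 'I_5) nat_of_bool ((x \in S) && (y \in T) && (y < x)))%N.
Proof.
rewrite pair_bigA /inv_count -sum1dep_card big_mkcond.
by apply: eq_bigr => -[x y] _ /=; rewrite andbA; case: ifP.
Qed.


Lemma lw_mono (R : realType) S T : lw (mono R S) (mono R T) =
  if [disjoint S & T] then lsc ((-1) ^+ inv_count S T) (mono R (S :|: T)) else 0.
Proof. by rewrite -lwE wedge_mono lscE. Qed.

Lemma genE (R : realType) i : gen (R[i]) i = mono R [set i].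
Proof. by apply/ffunP => U; rewrite monoE ffunE. Qed.
Lemma cstE (R : realType) (c : R[i]) : cst c = c *: mono R set0.
Proof. by apply/ffunP => U; rewrite fZ monoE ffunE; case: eqP; rewrite ?mulr1 ?mulr0. Qed.



Ltac lin := rewrite ?(LDl, LDr, LNl, LNr, LZl, LZr, lw0l, lw0r).
Ltac memb := rewrite ?in_setU ?in_setU1 ?in_set1 ?in_set0.
Ltac mon := rewrite ?lw_mono ?disj5; memb; rewrite /= ?lopp0 ?lsc0 ?ladd0 ?ladd0l ?inv5 ?sum5; memb; rewrite /=.
Ltac toL := rewrite ?lscE ?loppE ?laddE.

Definition NF {R : realType} (z w1 w2 zY : R[i]) (vary : bool) (j : 'I_5) : Defs.form R[i] :=
  ((z^* - zY^*)%C * -2) *: mono R [set i1; i2] + (2 * w1^*%C) *: mono R [set i0; i2]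
  - (2 * w2^*%C) *: mono R [set i0; i1]
  + (vary%:R * 2 * w1^*%C) *: mono R [set i2; j] - (vary%:R * 2 * w2^*%C) *: mono R [set i1; j].

Ltac pointwise := let U := fresh "U" in
  apply/ffunP => U; rewrite ?(laddU, loppU, lscU, f0) ?monoE ?eq5; memb; rewrite /=;
  move: (i0 \in U) (i1 \in U) (i2 \in U) (i3 \in U) (i4 \in U);
  case; case; case; case; case => /=; rewrite ?addn0 ?add0n; ring.

Lemma omega3 (R : realType) (z w1 w2 zY : R[i]) vary :
  omegaXY z w1 w2 zY (dzdef R vary i3) = NF z w1 w2 zY vary i3.
Proof.
rewrite /omegaXY /bracket /dzdef /NF !genE !cstE !lwE.
case: vary; rewrite ?genE; toL; lin; mon; lin; mon; pointwise.
Qed.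

Lemma omega4 (R : realType) (z w1 w2 zY : R[i]) vary :
  omegaXY z w1 w2 zY (dzdef R vary i4) = NF z w1 w2 zY vary i4.
Proof.
rewrite /omegaXY /bracket /dzdef /NF !genE !cstE !lwE.
case: vary; rewrite ?genE; toL; lin; mon; lin; mon; pointwise.
Qed.

Theorem lemma1 (R : realType) (z w1 w2 z1 z2 : R[i]) (vary1 vary2 : bool) :
  distsq z w1 w2 z1 != 0 -> distsq z w1 w2 z2 != 0 ->
  wedge (propK z w1 w2 z1 (dzdef R vary1 i3))
        (propK z w1 w2 z2 (dzdef R vary2 i4)) = 0.
Proof.
move=> _ _; rewrite /propK !lwE lwZl lwZr omega3 omega4.
suff -> : lw (NF z w1 w2 z1 vary1 i3) (NF z w1 w2 z2 vary2 i4) = 0.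
  by rewrite !scaler0.
rewrite /NF. toL. lin. mon.
pointwise.
Qed.
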